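(* Let $f:\mathbb{R}^d\to\mathbb{R}$ be convex and $L$-smooth and let $\gamma>0$. Consider the iterates $z_0=x_0\in\mathbb{R}^d$ and, for $k\ge0$, $$y_k=(1-c_{k+1})x_k+c_{k+1}z_k,\qquad z_{k+1}=z_k-\rho_k\nabla f(y_k),\qquad x_{k+1}=(1-c_{k+1})x_k+c_{k+1}z_{k+1},$$ with $c_{k+1}=\frac{2}{k+2}$ and $\rho_k=\frac{k+1}{\gamma L}$. Then for every $k\ge0$, $$-f(y_k)\le -f(x_{k+1})-2L\left(\frac{\gamma}{(k+1)^{\overline{2}}}-\frac{1}{(k+2)^2}\right)\|z_{k+1}-z_k\|^2,$$ where $(k+1)^{\overline 2}=(k+1)(k+2)$.
   Context: $L$-smooth means $f$ is differentiable and $\|\nabla f(x)-\nabla f(y)\|\le L\|x-y\|$ for all $x,y$. *)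

(* Defs.v *)
From HB Require Import structures.
From mathcomp Require Import all_boot all_order all_algebra.
From mathcomp Require Import all_classical all_reals all_analysis.
Set Implicit Arguments. Unset Strict Implicit. Unset Printing Implicit Defensive.
Import Order.TTheory GRing.Theory Num.Theory.
Import numFieldNormedType.Exports.
Local Open Scope ring_scope.

Section Defs.
Variables (R : realType) (d : nat).

Definition dotv (u v : 'rV[R]_d) : R := \sum_(i < d) u ord0 i * v ord0 i.
Definition enorm (u : 'rV[R]_d) : R := Num.sqrt (dotv u u).

(* Gradient: the vector of partial derivatives, i.e. the coordinates of the
   Frechet differential 'd f x in the standard basis. *)
Definition grad (f : 'rV[R]_d -> R) (x : 'rV[R]_d) : 'rV[R]_d :=
  \row_(i < d) ('d f x) (delta_mx 0 i).

Definition convex_fun (f : 'rV[R]_d -> R) : Prop :=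
  forall (x y : 'rV[R]_d) (t : R), 0 <= t -> t <= 1 ->
    f ((1 - t) *: x + t *: y) <= (1 - t) * f x + t * f y.

Definition L_smooth (L : R) (f : 'rV[R]_d -> R) : Prop :=
  (forall x, differentiable f x) /\
  forall x y, enorm (grad f x - grad f y) <= L * enorm (x - y).

Definition cc (k : nat) : R := 2 / (k%:R + 2).       (* c_{k+1} = 2/(k+2) *)
Definition rho (gamma L : R) (k : nat) : R := (k%:R + 1) / (gamma * L).

Fixpoint xz (f : 'rV[R]_d -> R) (gamma L : R) (x0 : 'rV[R]_d) (k : nat)
  : 'rV[R]_d * 'rV[R]_d :=
  match k with
  | 0%N => (x0, x0)
  | k'.+1 =>
      let xk := (xz f gamma L x0 k').1 in
      let zk := (xz f gamma L x0 k').2 in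
      let yk := (1 - cc k') *: xk + cc k' *: zk in
      let zk1 := zk - rho gamma L k' *: grad f yk in
      ((1 - cc k') *: xk + cc k' *: zk1, zk1)
  end.

Definition xs f gamma L x0 k := (xz f gamma L x0 k).1.
Definition zs f gamma L x0 k := (xz f gamma L x0 k).2.
Definition ys f gamma L x0 k :=
  (1 - cc k) *: xs f gamma L x0 k + cc k *: zs f gamma L x0 k.

End Defs.

(* Main.v *)
Require Import Defs.
From HB Require Import structures.
From mathcomp Require Import all_boot all_order all_algebra.
From mathcomp Require Import all_classical all_reals all_analysis.
From mathcomp Require Import ring lra.
Import Order.TTheory GRing.Theory Num.Theory.
Import numFieldNormedType.Exports.
Local Open Scope ring_scope.

Section S.
Variables (R : realType) (d : nat).
Implicit Types u v w : 'rV[R]_d.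

Lemma dotvC u v : dotv u v = dotv v u.
Proof. by apply: eq_bigr => i _; rewrite mulrC. Qed.
Lemma dotvDl u v w : dotv (u + v) w = dotv u w + dotv v w.
Proof. by rewrite /dotv -big_split; apply: eq_bigr => i _; rewrite !mxE mulrDl. Qed.
Lemma dotvZl (a : R) u v : dotv (a *: u) v = a * dotv u v.
Proof. by rewrite /dotv mulr_sumr; apply: eq_bigr => i _; rewrite !mxE mulrA. Qed.
Lemma dotvNl u v : dotv (- u) v = - dotv u v.
Proof. by rewrite -scaleN1r dotvZl mulN1r. Qed.
Lemma dotvBl u v w : dotv (u - v) w = dotv u w - dotv v w.
Proof. by rewrite dotvDl dotvNl. Qed.
Lemma dotvDr u v w : dotv w (u + v) = dotv w u + dotv w v.
Proof. by rewrite dotvC dotvDl !(dotvC w). Qed.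
Lemma dotvZr (a : R) u v : dotv v (a *: u) = a * dotv v u.
Proof. by rewrite dotvC dotvZl dotvC. Qed.
Lemma dotvNr u v : dotv v (- u) = - dotv v u.
Proof. by rewrite dotvC dotvNl dotvC. Qed.
Lemma dotvBr u v w : dotv w (u - v) = dotv w u - dotv w v.
Proof. by rewrite dotvDr dotvNr. Qed.
Lemma dotv_ge0 u : 0 <= dotv u u.
Proof. by apply: sumr_ge0 => i _; rewrite -expr2 sqr_ge0. Qed.
Lemma enorm_ge0 u : 0 <= enorm u.
Proof. exact: sqrtr_ge0. Qed.
Lemma enorm_sq u : enorm u ^+ 2 = dotv u u.
Proof. by rewrite /enorm sqr_sqrtr // dotv_ge0. Qed.

Lemma cs_aux (a v : 'rV[R]_d) (s : R) :
  2 * s * dotv a v <= dotv a a + s ^+ 2 * dotv v v.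
Proof.
have h := dotv_ge0 (a - s *: v).
rewrite dotvBl !dotvBr !dotvZl !dotvZr (dotvC v a) in h.
rewrite expr2; lra.
Qed.

Lemma diff_grad (f : 'rV[R]_d -> R) x v : 'd f x v = dotv (grad f x) v.
Proof.
rewrite {1}(row_sum_delta v) linear_sum /dotv; apply: eq_bigr => i _.
by rewrite linearZ /= mxE mulrC.
Qed.

Lemma line_derive (f : 'rV[R]_d -> R) x v t : differentiable f (x + t *: v) ->
  is_derive t (1:R) (fun s : R => f (x + s *: v)) (dotv (grad f (x + t *: v)) v).
Proof.
move=> df.
have E : (fun h : R => h^-1 *: (((fun s : R => f (x + s *: v)) \o shift t) (h *: 1) - f (x + t *: v)))
  = (fun h : R => h^-1 *: ((f \o shift (x + t *: v)) (h *: v) - f (x + t *: v))).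
  apply: funext => h /=; congr (_ *: (f _ - _)).
  by rewrite /shift /= [h%:A]mulr1 scalerDl addrCA addrA.
apply: DeriveDef.
  by rewrite /derivable E; apply: diff_derivable.
by rewrite /derive E -/(derive f (x + t *: v) v) deriveE // diff_grad.
Qed.
Lemma descent (f : 'rV[R]_d -> R) (L : R) x v : 0 < L -> L_smooth L f ->
  f (x + v) <= f x + dotv (grad f x) v + L / 2 * dotv v v.
Proof.
move=> L0 [fd fL].
set A := dotv (grad f x) v; set B := dotv v v.
pose G := fun s : R => f (x + s *: v).
pose phi := G - A \*: (@id R) - (L / 2 * B) \*: ((@id R) ^+ 2).
have D t : is_derive t (1:R) phi (dotv (grad f (x + t *: v)) v - A - L * t * B).
  have LD := line_derive f x v t (fd _).
  apply: (is_derive_eq (is_deriveB (is_deriveB LD _) _)).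
  rewrite [A%:A]mulr1 [(2 * _)%:A]mulr1 /= expr1 -[(L / 2 * B) *: _]/((L / 2 * B) * _). by field.
have Dle t : 0 < t -> dotv (grad f (x + t *: v)) v - A - L * t * B <= 0.
  move=> t0.
  set a := grad f (x + t *: v) - grad f x.
  have av : dotv a v = dotv (grad f (x + t *: v)) v - A by rewrite dotvBl.
  have h1 : dotv a a <= L ^+ 2 * (t * t * B).
    have := fL (x + t *: v) x; rewrite -/a addrAC subrr add0r => H.
    have : enorm a ^+ 2 <= (L * enorm (t *: v)) ^+ 2.
      by rewrite !expr2; apply: ler_pM => //; exact: enorm_ge0.
    by move=> h; rewrite exprMn !enorm_sq dotvZl dotvZr -/B mulrA in h; exact: h.
  have h2 := cs_aux a v (L * t); rewrite -/B in h2.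
  clearbody a A B.
  rewrite -av.
  have Lt : 0 < L * t by rewrite mulr_gt0.
  have e : L ^+ 2 * (t * t * B) = (L * t) * (L * t) * B by rewrite expr2; ring.
  rewrite e in h1.
  have h3 : (L * t) * (dotv a v - L * t * B) <= 0.
    rewrite expr2 in h2; move: h1 h2; generalize (dotv a a) (dotv a v) => q p h1 h2.
    have -> : L * t * (p - L * t * B) = (L * t) * p - (L * t) * (L * t) * B by ring.
    lra.
  by rewrite pmulr_rle0 in h3.
have cphi : forall t, t \in `[0, 1]%R -> derivable phi t 1 by move=> t _; have [] := D t.
have H1 : forall t, t \in `]0, 1[%R -> derivable phi t 1 by move=> t _; have [] := D t.
have H2 : forall t, t \in `]0, 1[%R -> derive1 phi t <= 0.
  move=> t; rewrite in_itv /= => /andP[t0 _].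
  by have [_ dv] := D t; rewrite derive1E dv; apply: Dle.
have := ler0_derive1_le_cc H1 H2 (derivable_within_continuous cphi).
move=> /(_ 1 0); rewrite !in_itv /= !lexx ler01 => /(_ isT isT isT).
rewrite /phi /G /=.
change (f (x + 1 *: v) - A * 1 - (L / 2 * B) * (1 * 1) <= f (x + 0 *: v) - A * 0 - (L / 2 * B) * (0 * 0) -> f (x + v) <= f x + A + L / 2 * B).
rewrite scale1r scale0r addr0 => h; lra.
Qed.
End S.

Theorem lemma22 (R : realType) (d : nat) (f : 'rV[R]_d -> R) (L gamma : R)
  (x0 : 'rV[R]_d) :
  0 < L -> convex_fun f -> L_smooth L f -> 0 < gamma ->
  forall k : nat,
    - f (ys f gamma L x0 k) <=
      - f (xs f gamma L x0 k.+1)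
      - 2 * L * (gamma / ((k%:R + 1) * (k%:R + 2)) - 1 / (k%:R + 2) ^+ 2)
          * enorm (zs f gamma L x0 k.+1 - zs f gamma L x0 k) ^+ 2.
Proof.
move=> L0 _ sm g0 k.
set c := cc R k; set r := rho gamma L k.
set X := xs f gamma L x0 k; set Z := zs f gamma L x0 k; set Y := ys f gamma L x0 k.
set g := grad f Y.
have ez : zs f gamma L x0 k.+1 = Z - r *: g by [].
have ex : xs f gamma L x0 k.+1 = (1 - c) *: X + c *: (Z - r *: g) by [].
have ey : Y = (1 - c) *: X + c *: Z by [].
rewrite ez ex.
have -> : (1 - c) *: X + c *: (Z - r *: g) = Y + (- (c * r)) *: g.
  by rewrite ey scalerBr scalerA addrA scaleNr.
have h := descent R d f L Y (- (c * r) *: g) L0 sm.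
rewrite dotvZr !dotvZl dotvZr -/g in h.
have -> : Z - r *: g - Z = (- r) *: g by rewrite addrC addrA addNr add0r scaleNr.
rewrite enorm_sq dotvZl dotvZr.
have k1 : 0 < k%:R + 1 :> R by rewrite ltr_wpDl.
have k2 : 0 < k%:R + 2 :> R by rewrite ltr_wpDl.
have e : 2 * L * (gamma / ((k%:R + 1) * (k%:R + 2)) - 1 / (k%:R + 2) ^+ 2) * (- r * (- r * dotv g g))
   = c * r * dotv g g - L / 2 * (c * r * (c * r * dotv g g)).
  rewrite /c /r /cc /rho; field.
  by rewrite !gt_eqF ?mulr_gt0.
rewrite e.
lra.
Qed.
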